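(* Let $X$ be a real normed linear space and $x\in X\setminus\{\theta\}$. Let $y_1,y_2\in X\setminus\{\theta\}$ satisfy $x\perp_B y_1$ and $x\perp_B y_2$. If $x$ is $\varepsilon$-smooth, where $0\le\varepsilon<\frac{2\|y_1+y_2\|}{\|y_1\|+\|y_2\|}\le2$, then there exists $\varepsilon_1\in[0,1)$ such that $x\perp_B^{\varepsilon_1}(y_1+y_2)$.
   Context: $x\perp_B y$ (Birkhoff–James orthogonality) means $\|x+\lambda y\|\ge\|x\|$ for all $\lambda\in\mathbb{R}$. For $\delta\in[0,1)$, $x\perp_B^\delta y$ means $\|x+\lambda y\|^2\ge\|x\|^2-2\delta\|x\|\|\lambda y\|$ for all $\lambda\in\mathbb{R}$. For $x\neq\theta$, $J(x)=\{f\in S_{X^*}:f(x)=\|x\|\}$, and $x$ is $\varepsilon$-smooth if $\sup_{f,g\in J(x)}\|f-g\|\le\varepsilon$. *)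

(* Defs.v *)
From HB Require Import structures.
From mathcomp Require Import all_boot all_order all_algebra.
From mathcomp Require Import all_classical all_reals all_analysis.
Set Implicit Arguments. Unset Strict Implicit. Unset Printing Implicit Defensive.
Import Order.TTheory GRing.Theory Num.Theory.
Import numFieldNormedType.Exports.
Local Open Scope classical_set_scope.
Local Open Scope ring_scope.

Section Defs.
Variables (R : realType) (X : normedModType R).

Definition BJ_orth (x y : X) : Prop :=
  forall l : R, `|x| <= `|x + l *: y|.

Definition BJ_orth_approx (delta : R) (x y : X) : Prop :=
  forall l : R, `|x| ^+ 2 - 2 * delta * `|x| * `|l *: y| <= `|x + l *: y| ^+ 2.

Definition is_linear_functional (f : X -> R) : Prop :=
  forall (a : R) (u v : X), f (a *: u + v) = a * f u + f v.

Definition is_bounded_functional (f : X -> R) : Prop :=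
  exists M : R, forall z : X, `|f z| <= M * `|z|.

Definition in_dual (f : X -> R) : Prop :=
  is_linear_functional f /\ is_bounded_functional f.

Definition dual_norm (f : X -> R) : R :=
  sup [set `|f z| | z in [set z : X | `|z| <= 1]].

Definition in_dual_sphere (f : X -> R) : Prop :=
  in_dual f /\ dual_norm f = 1.

Definition Jset (x : X) : set (X -> R) :=
  [set f | in_dual_sphere f /\ f x = `|x|].

Definition eps_smooth (eps : R) (x : X) : Prop :=
  forall f g : X -> R, f \in Jset x -> g \in Jset x ->
    dual_norm (fun z => f z - g z) <= eps.

End Defs.

(* Main.v *)
Require Import Defs.
From HB Require Import structures.
From mathcomp Require Import all_boot all_order all_algebra.
From mathcomp Require Import all_classical all_reals all_analysis.
From mathcomp Require Import ring lra.
Import Order.TTheory GRing.Theory Num.Theory.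
Import numFieldNormedType.Exports.
Local Open Scope ring_scope.

Set Implicit Arguments. Unset Strict Implicit.
Section HB.
Local Open Scope classical_set_scope.
Variables (R : realType) (X : normedModType R).

Definition closedG (G : set (X * R)) := forall a u r v s,
  G (u, r) -> G (v, s) -> G (a *: u + v, a * r + s).
Definition domG (G : set (X * R)) := forall u r, G (u, r) -> r <= `|u|.
Definition goodG G := closedG G /\ domG G /\ G (0, 0).

Lemma goodG_fun G u r s : goodG G -> G (u, r) -> G (u, s) -> r = s.
Proof.
move=> [cl [dm _]] Hr Hs.
have h1 := dm _ _ (cl (-1) u r u s Hr Hs).
have h2 := dm _ _ (cl (-1) u s u r Hs Hr).
rewrite scaleN1r addNr normr0 in h1 h2.
lra.
Qed.

Lemma goodG_scale G k u r : goodG G -> G (u, r) -> G (k *: u, k * r).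
Proof.
move=> [cl [_ z]] H; have := cl k u r 0 0 H z; by rewrite addr0 addr0.
Qed.

Lemma extend_step G z : goodG G -> ~ (exists r, G (z, r)) ->
  exists G', goodG G' /\ G `<=` G' /\ exists c, G' (z, c).
Proof.
move=> gG nz; have [cl [dm z0]] := gG.
pose A := [set t | exists u r, G (u, r) /\ t = r - `|u - z|].
pose c := sup A.
have key : forall u r v s, G (u, r) -> G (v, s) -> r - `|u - z| <= `|v + z| - s.
  move=> u r v s Hu Hv.
  have := dm _ _ (cl 1 u r v s Hu Hv); rewrite !scale1r !mul1r => h.
  have : `|u + v| <= `|u - z| + `|v + z|.
    have -> : u + v = (u - z) + (v + z) by rewrite addrACA addNr addr0.
    exact: ler_normD.
  lra.
have An0 : A !=set0 by exists (0 - `|0 - z|); exists 0, 0.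
have H1 : forall v s, G (v, s) -> s + c <= `|v + z|.
  move=> v s Hv; suff : c <= `|v + z| - s by lra.
  apply: ge_sup => // t [u [r [Hu ->]]]; exact: key.
have H2 : forall u r, G (u, r) -> r - c <= `|u - z|.
  move=> u r Hu; suff : r - `|u - z| <= c by lra.
  apply: ub_le_sup; last by exists u, r.
  exists (`|0 + z| - 0) => t [u' [r' [Hu' ->]]]; exact: key.
pose G' := [set p | exists u r t, G (u, r) /\ p = (u + t *: z, r + t * c)].
exists G'; split; last split.
- split; last split.
  + move=> a u1 r1 v s [u [r [t [Hu [-> ->]]]]] [u' [r' [t' [Hu' [-> ->]]]]].
    exists (a *: u + u'), (a * r + r'), (a * t + t'); split; first exact: cl.
    congr pair; first by rewrite scalerDr scalerA addrACA -scalerDl.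
    by rewrite mulrDr mulrA addrACA -mulrDl.
  + move=> u1 r1 [u [r [t [Hu [-> ->]]]]].
    have [tlt|tgt|t0] := ltgtP t 0.
    * have tn : 0 < - t by rewrite oppr_gt0.
      have := H2 _ _ (goodG_scale (- t)^-1 gG Hu) => h.
      have e : `|u + t *: z| = - t * `|(- t)^-1 *: u - z|.
        rewrite -(gtr0_norm tn) -normrZ gtr0_norm // scalerBr scalerA mulfV ?gt_eqF //.
        by rewrite scale1r scaleNr opprK.
      rewrite e; have h' := ler_wpM2l (ltW tn) h.
      rewrite mulrBr mulrA mulfV ?gt_eqF // mul1r in h'; lra.
    * have := H1 _ _ (goodG_scale t^-1 gG Hu) => h.
      have e : `|u + t *: z| = t * `|t^-1 *: u + z|.
        rewrite -(gtr0_norm tgt) -normrZ gtr0_norm // scalerDr scalerA mulfV ?gt_eqF //.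
        by rewrite scale1r.
      rewrite e; have h' := ler_wpM2l (ltW tgt) h.
      rewrite mulrDr mulrA mulfV ?gt_eqF // mul1r in h'; lra.
    * subst t; rewrite scale0r addr0 mul0r addr0; exact: dm.
  + by exists 0, 0, 0; rewrite scale0r addr0 mul0r addr0.
- by move=> [u r] Hu; exists u, r, 0; rewrite scale0r addr0 mul0r addr0.
- by exists c, 0, 0, 1; rewrite scale1r add0r mul1r add0r.
Qed.


Lemma hahn_banach_graph G0 : goodG G0 ->
  exists M, goodG M /\ G0 `<=` M /\ forall z, exists r, M (z, r).
Proof.
move=> g0.
pose P := fun A : set (X * R) => goodG (A `|` G0).
have [|A [PA Amax]] := @Zorn_bigcup _ P.
  move=> F FP Ftot.
  set U := \bigcup_(Y in F) Y.
  have cover : forall p q, (U `|` G0) p -> (U `|` G0) q ->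
      exists Y, goodG (Y `|` G0) /\ (Y `|` G0) p /\ (Y `|` G0) q /\ Y `<=` U.
    move=> p q [[Y1 FY1 Y1p]|G0p] [[Y2 FY2 Y2q]|G0q].
    - have [s12|s21] := Ftot _ _ FY1 FY2.
      + exists Y2; split; first exact: FP.
        by split; [left; exact: s12|split; [left|move=> w Yw; exists Y2]].
      + exists Y1; split; first exact: FP.
        by split; [left|split; [left; exact: s21|move=> w Yw; exists Y1]].
    - exists Y1; split; first exact: FP.
      by split; [left|split; [right|move=> w Yw; exists Y1]].
    - exists Y2; split; first exact: FP.
      by split; [right|split; [left|move=> w Yw; exists Y2]].
    - exists set0; rewrite set0U; split => //; split => //; split => //.
  split; last split.
  - move=> a u r v s Hp Hq.
    have [Y [[cl _] [Yp [Yq YU]]]] := cover _ _ Hp Hq.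
    case: (cl a u r v s Yp Yq) => [/YU|]; by [left|right].
  - move=> u r Hp.
    have [Y [[_ [dm _]] [Yp _]]] := cover _ _ Hp Hp.
    exact: dm.
  - by right; case: g0 => _ [].
have gM := PA; set M := A `|` G0 in gM.
exists M; split => //; split; first by move=> p; right.
move=> z; case: (pselect (exists r, M (z, r))) => // nz.
have [G' [gG' [MG' [c G'z]]]] := extend_step gM nz.
exfalso; apply: (Amax G'); last by rewrite /P setUidl // => p G0p; apply: MG'; right.
split; first by move=> p Ap; apply: MG'; left.
move=> G'A; apply: nz; exists c; left; exact: G'A.
Qed.

Lemma lin_add (f : X -> R) : is_linear_functional f -> forall u v, f (u + v) = f u + f v.
Proof. by move=> lf u v; rewrite -[u in LHS]scale1r lf mul1r. Qed.

Lemma lin_0 (f : X -> R) : is_linear_functional f -> f 0 = 0.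
Proof. move=> lf; have := lin_add lf 0 0; rewrite addr0 => h; lra. Qed.

Lemma lin_scale (f : X -> R) : is_linear_functional f -> forall a u, f (a *: u) = a * f u.
Proof. by move=> lf a u; rewrite -[a *: u]addr0 lf lin_0 // addr0. Qed.

Lemma dual_bound (g : X -> R) (C : R) : is_linear_functional g ->
  (forall v, `|g v| <= C * `|v|) -> forall z, `|g z| <= dual_norm g * `|z|.
Proof.
move=> lg gb z.
have [->|zn0] := eqVneq z 0; first by rewrite lin_0 // normr0 normr0 mulr0.
have nz : 0 < `|z| by rewrite normr_gt0.
pose w := `|z|^-1 *: z.
have nw : `|w| = 1 by rewrite normrZ normrV ?unitfE ?gt_eqF // normr_id mulVf ?gt_eqF.
have hs : `|g w| <= dual_norm g.
  apply: ub_le_sup; last by exists w => //; rewrite /mkset nw.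
  exists `|C| => _ [v /= vn <-].
  apply: (le_trans (gb v)); apply: (le_trans (ler_norm _)).
  rewrite normrM; apply: ler_piMr => //; by rewrite normr_id.
have e : `|g z| = `|z| * `|g w|.
  rewrite /w lin_scale // normrM normrV ?unitfE ?gt_eqF // normr_id mulrA mulfV ?gt_eqF //.
  by rewrite mul1r.
rewrite e mulrC; apply: ler_wpM2r => //.
Qed.

Lemma exists_J (x y : X) : x != 0 -> BJ_orth x y ->
  exists f, f \in Jset x /\ f y = 0 /\ is_linear_functional f /\
     (forall z, f z <= `|z|).
Proof.
move=> xn0 bj.
have nx : 0 < `|x| by rewrite normr_gt0.
pose G0 := [set p : X * R | exists a b, p = (a *: x + b *: y, a * `|x|)].
have g0 : goodG G0.
  split; last split.
  - move=> c u r v s [a [b [-> ->]]] [a' [b' [-> ->]]].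
    exists (c * a + a'), (c * b + b'); congr pair.
      rewrite scalerDr !scalerA addrACA -!scalerDl //.
    by rewrite mulrA mulrDl.
  - move=> u r [a [b [-> ->]]].
    have [->|an0] := eqVneq a 0; first by rewrite mul0r.
    have -> : a *: x + b *: y = a *: (x + (b / a) *: y).
      by rewrite scalerDr scalerA mulrCA mulfV // mulr1.
    rewrite normrZ; apply: (le_trans (ler_wpM2r (normr_ge0 x) (ler_norm a))).
    apply: ler_wpM2l => //; exact: bj.
  - by exists 0, 0; rewrite !scale0r addr0 mul0r.
have [M [gM [G0M Mtot]]] := hahn_banach_graph g0.
have [F HF] := choice Mtot.
have Fe : forall z r, M (z, r) -> F z = r.
  move=> z r Hz; exact: goodG_fun gM (HF z) Hz.
have lF : is_linear_functional F.
  move=> a u v; apply: Fe; case: gM => cl _; exact: cl.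
have Fle : forall z, F z <= `|z|.
  move=> z; case: gM => _ [dm _]; exact: dm.
have Fabs : forall z, `|F z| <= `|z|.
  move=> z; rewrite ler_norml Fle andbT.
  have := Fle (- z); rewrite normrN -scaleN1r lin_scale // => h; lra.
have Fx : F x = `|x|.
  apply: Fe; apply: G0M; exists 1, 0; by rewrite scale1r scale0r addr0 mul1r.
exists F; split; last first.
  split; last by split.
  apply: Fe; apply: G0M; exists 0, 1; by rewrite scale1r scale0r add0r mul0r.
rewrite inE; split => //; split; first split => //.
  by exists 1 => z; rewrite mul1r.
apply/eqP; rewrite eq_le; apply/andP; split.
  apply: ge_sup; first by exists `|F 0|, 0 => //=; rewrite normr0.
  move=> _ [v /= vn <-]; exact: le_trans (Fabs v) vn.
pose w := `|x|^-1 *: x.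
have nw : `|w| = 1 by rewrite normrZ normrV ?unitfE ?gt_eqF // normr_id mulVf ?gt_eqF.
have -> : 1 = `|F w|.
  by rewrite lin_scale // Fx mulVf ?gt_eqF // normr1.
apply: ub_le_sup; last by exists w => //; rewrite /mkset nw.
exists 1 => _ [v /= vn <-]; exact: le_trans (Fabs v) vn.
Qed.

End HB.
Unset Implicit Arguments. Set Strict Implicit.

Theorem theorem4p3 (R : realType) (X : normedModType R) (x y1 y2 : X) (eps : R) :
  x != 0 -> y1 != 0 -> y2 != 0 ->
  BJ_orth x y1 -> BJ_orth x y2 ->
  eps_smooth eps x ->
  0 <= eps -> eps < 2 * `|y1 + y2| / (`|y1| + `|y2|) ->
  exists eps1 : R, 0 <= eps1 < 1 /\ BJ_orth_approx eps1 x (y1 + y2).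
Proof.
move=> xn0 y1n0 y2n0 o1 o2 sm e0 elt.
have [f1 [J1 [f1y1 [l1 b1]]]] := exists_J xn0 o1.
have [f2 [J2 [f2y2 [l2 b2]]]] := exists_J xn0 o2.
have hs := sm f1 f2 J1 J2.
have ab1 : forall z, `|f1 z| <= `|z|.
  move=> z; rewrite ler_norml b1 andbT.
  have := b1 (- z); rewrite normrN -scaleN1r lin_scale // => h; lra.
have ab2 : forall z, `|f2 z| <= `|z|.
  move=> z; rewrite ler_norml b2 andbT.
  have := b2 (- z); rewrite normrN -scaleN1r lin_scale // => h; lra.
have lg : is_linear_functional (fun z => f1 z - f2 z).
  by move=> a u v; rewrite l1 l2; lra.
have gb : forall v, `|f1 v - f2 v| <= 2 * `|v|.
  move=> v; apply: (le_trans (ler_normB _ _)).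
  have := ab1 v; have := ab2 v; lra.
have d1 := dual_bound lg gb y1.
have d2 := dual_bound lg gb y2.
rewrite /= f1y1 f2y2 sub0r normrN subr0 in d1 d2.
have n1 : 0 < `|y1| by rewrite normr_gt0.
have n2 : 0 < `|y2| by rewrite normr_gt0.
have e1 : `|f2 y1| <= eps * `|y1|.
  apply: (le_trans d1); apply: ler_wpM2r => //.
have e2 : `|f1 y2| <= eps * `|y2|.
  apply: (le_trans d2); apply: ler_wpM2r => //.
set ny := `|y1 + y2|.
have elt' : eps * (`|y1| + `|y2|) < 2 * ny.
  by rewrite -ltr_pdivlMr // addr_gt0.
pose K := eps * (`|y1| + `|y2|) / 2.
have K0 : 0 <= K by rewrite /K !mulr_ge0 // addr_ge0.
have Kny : K < ny by rewrite /K; lra.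
have nyp : 0 < ny by apply: le_lt_trans Kny.
exists (K / ny); split.
  apply/andP; split; first by rewrite divr_ge0 // ltW.
  by rewrite ltr_pdivrMr // mul1r.
move=> l.
pose h := fun v => (f1 v + f2 v) / 2.
have hy : `|h (y1 + y2)| <= K.
  rewrite /h lin_add // lin_add // f1y1 f2y2 add0r addr0 /K.
  rewrite normrM (@ger0_norm _ (2^-1)) ?invr_ge0 //; apply: ler_wpM2r; first by rewrite invr_ge0.
  apply: (le_trans (ler_normD _ _)); rewrite mulrDr.
  by rewrite addrC; apply: lerD.
have hx : h (x + l *: (y1 + y2)) = `|x| + l * h (y1 + y2).
  have [_ f1x] : in_dual_sphere f1 /\ f1 x = `|x| by move: J1; rewrite inE.
  have [_ f2x] : in_dual_sphere f2 /\ f2 x = `|x| by move: J2; rewrite inE.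
  rewrite /h (lin_add l1) (lin_add l2) (lin_scale l1) (lin_scale l2) f1x f2x.
  rewrite (lin_add l1) (lin_add l2) f1y1 f2y2.
  lra.
have hle : h (x + l *: (y1 + y2)) <= `|x + l *: (y1 + y2)|.
  rewrite /h; have := b1 (x + l *: (y1 + y2)); have := b2 (x + l *: (y1 + y2)); lra.
have lb : `|x| - `|l| * K <= `|x + l *: (y1 + y2)|.
  apply: le_trans hle; rewrite hx.
  have : `|l * h (y1 + y2)| <= `|l| * K by rewrite normrM; apply: ler_wpM2l.
  rewrite ler_norml => /andP[+ _]; lra.
have -> : 2 * (K / ny) * `|x| * `|l *: (y1 + y2)| = 2 * `|x| * (`|l| * K).
  rewrite normrZ -/ny; field; by rewrite gt_eqF.
have la : 0 <= `|l| * K by rewrite mulr_ge0.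
have xn : 0 <= `|x| by [].
have N0 := normr_ge0 (x + l *: (y1 + y2)).
move: lb la xn N0.
move: (`|l| * K) (`|x + l *: (y1 + y2)|) (`|x|) => t N n lb la xn N0.
have [c|c] := lerP t n; nra.
Qed.
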